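(* Let $C=(X,\xi)$ be a finite $T$-coalgebra. For every $x\in X$ there exists a closed and guarded expression $\phi\in\mathcal{E}_0$ such that $x\in[\![\phi]\!]_C$.
   Context: Standing assumptions: $T:\mathbf{Set}\to\mathbf{Set}$ is a functor; $\mathcal{L}$ is a set of modalities with arities ($L/n$), each $L/n$ assigned an $n$-ary monotone singleton-preserving predicate lifting $[\![L]\!]$ for $T$ such that $\Lambda=\{[\![L]\!]\mid L\in\mathcal{L}\}$ is strongly expressive. (An $n$-ary predicate lifting is a family $\lambda_X:(\mathcal{P}X)^n\to\mathcal{P}(TX)$ with $\lambda_X(f^{-1}[A_1],\dots,f^{-1}[A_n])=(Tf)^{-1}[\lambda_Y(A_1,\dots,A_n)]$ for $f:X\to Y$; monotone if monotone in each argument; singleton-preserving if $|\lambda_X(\{x_1\},\dots,\{x_n\})|=1$ for all $x_i\in X$; $\Lambda$ strongly expressive if for every set $X$ and $t\in TX$ there are $\lambda/n\in\Lambda$, $x_i\in X$ with $\{t\}=\lambda_X(\{x_1\},\dots,\{x_n\})$.) Fix a set $V$ of variables. Expressions $\mathcal{E}$: $\phi::=z\mid\nu z.\,\phi\mid L(\phi_1,\dots,\phi_n)$. Closed: every variable occurrence bound by a $\nu$. Guarded: every variable occurrence is separated from its binding $\nu$ by at least one modality. $\mathcal{E}_0$ is the set of closed guarded expressions. Semantics in a coalgebra $C=(X,\xi)$ under valuation $\kappa:V\to\mathcal{P}X$: $[\![z]\!]^\kappa=\kappa(z)$; $[\![L(\phi_1,\dots,\phi_n)]\!]^\kappa=\xi^{-1}[[\![L]\!]_X([\![\phi_1]\!]^\kappa,\dots,[\![\phi_n]\!]^\kappa)]$;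 $[\![\nu z.\phi]\!]^\kappa=$ greatest fixed point of $Y\mapsto[\![\phi]\!]^{\kappa[z\mapsto Y]}$; for closed $\phi$ write $[\![\phi]\!]_C$. *)

(* Defs.v *)
From Stdlib Require Import Fin FinFun.



Record SetFunctor := {
  Tobj :> Type -> Type;
  fmap : forall (X Y : Type), (X -> Y) -> Tobj X -> Tobj Y;
  fmap_id : forall (X : Type) (t : Tobj X), fmap X X (fun x : X => x) t = t;
  fmap_comp : forall (X Y Z : Type) (f : X -> Y) (g : Y -> Z) (t : Tobj X),
      fmap X Z (fun x => g (f x)) t = fmap Y Z g (fmap X Y f t)
}.

Section Logic.
Variable T : SetFunctor.
Variable Mod : Type.
Variable ar : Mod -> nat.
(** [lift L X] is [[L]]_X : (P X)^n -> P (T X); subsets are predicates. *)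
Variable lift : forall (L : Mod) (X : Type),
    (Fin.t (ar L) -> X -> Prop) -> T X -> Prop.

Definition natural_lifting : Prop :=
  forall (L : Mod) (X Y : Type) (f : X -> Y) (A : Fin.t (ar L) -> Y -> Prop) (t : T X),
    lift L X (fun i x => A i (f x)) t <-> lift L Y A (fmap T X Y f t).

Definition monotone_lifting : Prop :=
  forall (L : Mod) (X : Type) (A B : Fin.t (ar L) -> X -> Prop) (t : T X),
    (forall i x, A i x -> B i x) -> lift L X A t -> lift L X B t.

Definition singleton_preserving : Prop :=
  forall (L : Mod) (X : Type) (xs : Fin.t (ar L) -> X),
    exists t : T X, forall t', lift L X (fun i y => y = xs i) t' <-> t' = t.

Definition strongly_expressive : Prop :=
  forall (X : Type) (t : T X),
    exists (L : Mod) (xs : Fin.t (ar L) -> X),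
      forall t', lift L X (fun i y => y = xs i) t' <-> t' = t.

Variable V : Type.

Inductive expr : Type :=
| evar : V -> expr
| enu : V -> expr -> expr
| emod : forall L : Mod, (Fin.t (ar L) -> expr) -> expr.

Fixpoint free (z : V) (phi : expr) : Prop :=
  match phi with
  | evar w => w = z
  | enu w psi => w <> z /\ free z psi
  | emod L args => exists i, free z (args i)
  end.

Definition closed (phi : expr) : Prop := forall z, ~ free z phi.

Fixpoint unguarded_free (z : V) (phi : expr) : Prop :=
  match phi with
  | evar w => w = z
  | enu w psi => w <> z /\ unguarded_free z psi
  | emod _ _ => False
  end.

Fixpoint guarded (phi : expr) : Prop :=
  match phi with
  | evar _ => True
  | enu z psi => ~ unguarded_free z psi /\ guarded psi
  | emod L args => forall i, guarded (args i)
  end.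

Definition closed_guarded (phi : expr) : Prop := closed phi /\ guarded phi.

Variable X : Type.
Variable xi : X -> T X.

Definition upd (kappa : V -> X -> Prop) (z : V) (Y : X -> Prop) : V -> X -> Prop :=
  fun w x => (w = z /\ Y x) \/ (w <> z /\ kappa w x).

(** greatest fixed point = union of all post-fixed points (Knaster-Tarski) *)
Definition gfp (F : (X -> Prop) -> (X -> Prop)) : X -> Prop :=
  fun x => exists Y : X -> Prop, (forall y, Y y -> F Y y) /\ Y x.

Fixpoint sem (phi : expr) (kappa : V -> X -> Prop) : X -> Prop :=
  match phi with
  | evar z => kappa z
  | enu z psi => gfp (fun Y => sem psi (upd kappa z Y))
  | emod L args => fun x => lift L X (fun i => sem (args i) kappa) (xi x)
  end.

(** [[phi]]_C for closed phi (valuation irrelevant; we use the empty one) *)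
Definition sem_closed (phi : expr) : X -> Prop := sem phi (fun _ _ => False).

End Logic.

Arguments fmap {s X Y} _ _.
Arguments expr {Mod} ar V.
Arguments evar {Mod ar V} _.
Arguments enu {Mod ar V} _ _.
Arguments emod {Mod ar V} _ _.

(* Main.v *)
Require Import Defs.
From Stdlib Require Import Fin FinFun List ClassicalEpsilon Lia.

Definition lookupX {X : Type} (x : X) (vs : list (X * nat)) : option nat :=
  match excluded_middle_informative (exists k, In (x,k) vs) with
  | left H => Some (proj1_sig (constructive_indefinite_description _ H))
  | right _ => None
  end.

Lemma lookupX_some {X : Type} (x : X) vs k : lookupX x vs = Some k -> In (x,k) vs.
Proof.
  unfold lookupX. destruct excluded_middle_informative as [H|H]; [|discriminate].
  intros E; injection E; intros <-. exact (proj2_sig (constructive_indefinite_description _ H)).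
Qed.

Lemma lookupX_none {X : Type} (x : X) vs : lookupX x vs = None -> forall k, ~ In (x,k) vs.
Proof.
  unfold lookupX. destruct excluded_middle_informative as [H|H]; [discriminate|].
  intros _ k Hk. apply H. eauto.
Qed.

Fixpoint ee {Mod : Type} {ar : Mod -> nat} {V X : Type} (vars : nat -> V)
  (Lf : X -> Mod) (xsf : forall y, Fin.t (ar (Lf y)) -> X)
  (n : nat) (vs : list (X * nat)) (x : X) : expr ar V :=
  match lookupX x vs with
  | Some k => evar (vars k)
  | None =>
    match n with
    | 0 => enu (vars 0) (emod (Lf x) (fun _ => evar (vars 0)))
    | Datatypes.S n' => enu (vars (length vs))
        (emod (Lf x) (fun i => ee vars Lf xsf n' ((x, length vs) :: vs) (xsf x i)))
    end
  end.

Lemma ee_guarded {Mod : Type} {ar : Mod -> nat} {V X : Type} (vars : nat -> V)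
  (Lf : X -> Mod) (xsf : forall y, Fin.t (ar (Lf y)) -> X) :
  forall n vs x, guarded Mod ar V (ee vars Lf xsf n vs x).
Proof.
  induction n; intros vs x; simpl; destruct (lookupX x vs); simpl; auto.
  all: try (split; [tauto|]; intros i; simpl; auto).
Qed.

Lemma ee_free {Mod : Type} {ar : Mod -> nat} {V X : Type} (vars : nat -> V)
  (Lf : X -> Mod) (xsf : forall y, Fin.t (ar (Lf y)) -> X) :
  forall n vs x z, free Mod ar V z (ee vars Lf xsf n vs x) ->
    exists y k, In (y,k) vs /\ z = vars k.
Proof.
  induction n; intros vs x z; simpl; destruct (lookupX x vs) eqn:E; simpl.
  - intros <-. exists x, n. split; auto. apply lookupX_some; auto.
  - intros [Hne [i Hf]]. simpl in Hf. congruence.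
  - intros <-. exists x, n0. split; auto. apply lookupX_some; auto.
  - intros [Hne [i Hf]]. destruct (IHn _ _ _ Hf) as [y [k [Hin ->]]].
    destruct Hin as [Heq|Hin].
    + injection Heq; intros <- <-. contradiction.
    + exists y, k; auto.
Qed.

Lemma ee_sem (T : SetFunctor) (Mod : Type) (ar : Mod -> nat)
  (lift : forall (L : Mod) (X : Type), (Fin.t (ar L) -> X -> Prop) -> T X -> Prop)
  (Hmon : monotone_lifting T Mod ar lift)
  (V : Type) (vars : nat -> V) (Hvars : Injective vars)
  (X : Type) (xi : X -> T X) (l : list X) (Hl : Full l)
  (Lf : X -> Mod) (xsf : forall y, Fin.t (ar (Lf y)) -> X)
  (Hspec : forall y t', lift (Lf y) X (fun i z => z = xsf y i) t' <-> t' = xi y) :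
  forall n vs x kappa,
    (forall y k, In (y,k) vs -> kappa (vars k) y) ->
    (forall y k, In (y,k) vs -> k < length vs) ->
    NoDup (map fst vs) -> length l <= n + length vs ->
    sem T Mod ar lift V X xi (ee vars Lf xsf n vs x) kappa x.
Proof.
  induction n; intros vs x kappa Hk Hlt Hnd Hlen; simpl;
    destruct (lookupX x vs) eqn:E.
  - simpl. apply Hk. apply lookupX_some; auto.
  - exfalso. assert (Hn : NoDup (x :: map fst vs)).
    { constructor; auto. intros Hin. apply in_map_iff in Hin.
      destruct Hin as [[y k] [Hy Hin]]. simpl in Hy; subst y.
      exact (lookupX_none _ _ E k Hin). }
    pose proof (NoDup_incl_length Hn (fun a _ => Hl a)) as H.
    simpl in H. rewrite length_map in H. lia.
  - simpl. apply Hk. apply lookupX_some; auto.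
  - simpl. exists (fun y => y = x). split; [|reflexivity].
    intros y ->.
    apply (Hmon _ _ (fun i z => z = xsf x i)); [| apply Hspec; reflexivity].
    intros i z ->. apply IHn.
    + intros y k [Heq|Hin].
      * injection Heq; intros <- <-. unfold upd. left. auto.
      * unfold upd. right. split; [|apply Hk; auto].
        intros Hv. apply Hvars in Hv. specialize (Hlt _ _ Hin). lia.
    + intros y k [Heq|Hin].
      * injection Heq; intros <- <-. simpl. lia.
      * simpl. specialize (Hlt _ _ Hin). lia.
    + simpl. constructor; auto. intros Hin. apply in_map_iff in Hin.
      destruct Hin as [[y k] [Hy Hin]]. simpl in Hy; subst y.
      exact (lookupX_none _ _ E k Hin).
    + simpl. lia.
Qed.

Theorem mainTheorem12
  (T : SetFunctor) (Mod : Type) (ar : Mod -> nat)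
  (lift : forall (L : Mod) (X : Type), (Fin.t (ar L) -> X -> Prop) -> T X -> Prop)
  (Hnat : natural_lifting T Mod ar lift)
  (Hmon : monotone_lifting T Mod ar lift)
  (Hsing : singleton_preserving T Mod ar lift)
  (Hexpr : strongly_expressive T Mod ar lift)
  (V : Type) (vars : nat -> V) (Hvars : Injective vars)
  (X : Type) (xi : X -> T X) (HX : Finite X) :
  forall x : X, exists phi : expr ar V,
    closed_guarded Mod ar V phi /\ sem_closed T Mod ar lift V X xi phi x.
Proof.
  intros x. destruct HX as [l Hl].
  set (Lf := fun y => proj1_sig (constructive_indefinite_description _ (Hexpr X (xi y)))).
  set (xsf := (fun y => proj1_sig (constructive_indefinite_description _
        (proj2_sig (constructive_indefinite_description _ (Hexpr X (xi y))))))
        : forall y, Fin.t (ar (Lf y)) -> X).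
  assert (Hspec : forall y t', lift (Lf y) X (fun i z => z = xsf y i) t' <-> t' = xi y).
  { intros y. exact (proj2_sig (constructive_indefinite_description _
        (proj2_sig (constructive_indefinite_description _ (Hexpr X (xi y)))))). }
  exists (ee vars Lf xsf (length l) nil x). split; [split|].
  - intros z Hf. destruct (ee_free vars Lf xsf _ _ _ _ Hf) as [y [k [[] _]]].
  - apply ee_guarded.
  - unfold sem_closed. apply (ee_sem T Mod ar lift Hmon V vars Hvars X xi l Hl Lf xsf Hspec).
    + intros y k [].
    + intros y k [].
    + constructor.
    + simpl. lia.
Qed.
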